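(* Let $N\geq3$ and let $(M,g)$ be an $N$-dimensional Riemannian model with pole $o$ and metric $ds^2=dr^2+\psi^2(r)\,d\omega^2$, where $\psi$ is a $C^\infty$ nonnegative function on $[0,+\infty)$, positive on $(0,+\infty)$, with $\psi'(0)=1$, $\psi^{(2k)}(0)=0$ for all $k\geq0$, and such that $\psi(r)=Ae^{br^{a+1}}$ for $r\geq R$, for some $R,A,b>0$ and $a\geq0$. Then for all $u\in C_c^\infty(M\setminus B_R(o))$, $$\int_M\Big(\frac{\partial u}{\partial r}\Big)^2dv_g\geq\Big(\frac{N-1}{2}\Big)^2(a+1)^2b^2\int_M r^{2a}u^2dv_g+\frac14\int_M\frac{u^2}{r^2}dv_g+\frac{2ba(a+1)(N-1)}{4}\int_M r^{a-1}u^2dv_g.$$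
   Context: $d\omega^2$ is the standard metric on $\mathbb{S}^{N-1}$, $r$ the geodesic distance from $o$, $B_R(o)$ the geodesic ball of radius $R$ centered at $o$, $\frac{\partial u}{\partial r}$ the radial derivative, $dv_g$ the Riemannian volume. *)

(* Defs.v *)
From HB Require Import structures.
From mathcomp Require Import all_boot all_order all_algebra.
From mathcomp Require Import all_classical all_reals all_analysis.
Set Implicit Arguments. Unset Strict Implicit. Unset Printing Implicit Defensive.
Import Order.TTheory GRing.Theory Num.Theory.
Import numFieldNormedType.Exports.
Local Open Scope classical_set_scope.
Local Open Scope ring_scope.

Definition smooth_on (R : realType) (f : R -> R) (A : set R) : Prop :=
  forall (n : nat) (x : R), A x -> derivable (derive1n n f) x 1.

(* Integral over the Riemannian model M \ {o} written in polar coordinates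
   (r, w) in (0,+oo) x Omega, with volume dv_g = psi(r)^(N-1) dr dsigma(w):
   int_M f dv_g = int_Omega ( int_0^oo f(r,w) psi(r)^(N-1) dr ) dsigma(w). *)
Definition model_integral (R : realType) (d : measure_display)
  (Omega : measurableType d) (sigma : {measure set Omega -> \bar R})
  (N : nat) (psi : R -> R) (f : R -> Omega -> R) : \bar R :=
  (\int[sigma]_(w in [set: Omega])
     \int[@lebesgue_measure R]_(r in `]0%R, +oo[%classic)
        ((f r w) * psi r ^+ N.-1)%:E)%E.

(* Main.v *)
Require Import Defs.

From HB Require Import structures.
From mathcomp Require Import all_boot all_order all_algebra.
From mathcomp Require Import all_classical all_reals all_analysis.
Import Order.TTheory GRing.Theory Num.Theory.
Import numFieldNormedType.Exports.
Local Open Scope classical_set_scope.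
Local Open Scope ring_scope.

From mathcomp Require Import ring lra measurable_realfun.
Local Open Scope classical_set_scope.
Local Open Scope ring_scope.

Section Helpers.
Context {R : realType}.
Implicit Types (f g : R -> R) (x : R).

Lemma cM {f g x} : {for x, continuous f} -> {for x, continuous g} ->
  {for x, continuous (fun y => f y * g y)}.
Proof. exact: continuousM. Qed.

Lemma cD {f g x} : {for x, continuous f} -> {for x, continuous g} ->
  {for x, continuous (fun y => f y + g y)}.
Proof. exact: continuousD. Qed.

Lemma cB {f g x} : {for x, continuous f} -> {for x, continuous g} ->
  {for x, continuous (fun y => f y - g y)}.
Proof. exact: continuousB. Qed.

Lemma cC (k : R) x : {for x, continuous (fun _ : R => k)}.
Proof. exact: cst_continuous. Qed.

Lemma cX {f x} k : {for x, continuous f} -> {for x, continuous (fun y => f y ^+ k)}.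
Proof.
move=> cf; elim: k => [|k IH].
  have e : (fun y => f y ^+ 0) = (fun _ => 1) by apply/funext=> y; rewrite expr0.
  move: (cC 1 x); rewrite /prop_for /continuous_at -e expr0. done.
have e : (fun y => f y ^+ k.+1) = (fun y => f y * f y ^+ k).
  by apply/funext=> y; rewrite exprS.
move: (cM cf IH); rewrite /prop_for /continuous_at -e -exprS. done.
Qed.

Lemma cV {f x} : f x != 0 -> {for x, continuous f} -> {for x, continuous (fun y => (f y)^-1)}.
Proof. exact: continuousV. Qed.

Lemma dcont {f x} : derivable f x 1 -> {for x, continuous f}.
Proof. by move=> /derivable1_diffP; exact: differentiable_continuous. Qed.

Lemma is_derive_zero_near f x : (\forall y \near x, f y = 0) -> derive1 f x = 0.
Proof.
move=> h; rewrite derive1E; apply: derive_val.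
apply: (near_eq_is_derive _ (is_derive_cst (0:R) x 1)).
by near=> y; rewrite /= (near h y).
Unshelve. all: by end_near.
Qed.

End Helpers.
Section Deriv.
Context {R : realType}.
Implicit Types (f g : R -> R) (x : R).

Lemma DM {f g x df dg} : is_derive x 1 f df -> is_derive x 1 g dg ->
  is_derive x 1 (fun y => f y * g y) (f x * dg + g x * df).
Proof. by move=> hf hg; apply: is_derive_eq (is_deriveM hf hg) _. Qed.

Lemma DD {f g x df dg} : is_derive x 1 f df -> is_derive x 1 g dg ->
  is_derive x 1 (fun y => f y + g y) (df + dg).
Proof. by move=> hf hg; apply: is_derive_eq (is_deriveD hf hg) _. Qed.

Lemma DB {f g x df dg} : is_derive x 1 f df -> is_derive x 1 g dg ->
  is_derive x 1 (fun y => f y - g y) (df - dg).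
Proof. by move=> hf hg; apply: is_derive_eq (is_deriveB hf hg) _. Qed.

Lemma DC (k : R) x : is_derive x 1 (fun _ => k) 0.
Proof. exact: is_derive_cst. Qed.

Lemma DI x : is_derive x 1 (fun y : R => y) 1.
Proof. exact: is_derive_id. Qed.

Lemma DX {f x df} k : is_derive x 1 f df ->
  is_derive x 1 (fun y => f y ^+ k) (k%:R * f x ^+ k.-1 * df).
Proof.
move=> hf; elim: k => [|k IH].
  rewrite (_ : (fun y => f y ^+ 0) = (fun _ => 1)); last by apply/funext=> y.
  by rewrite mul0r mul0r; exact: DC.
rewrite (_ : (fun y => f y ^+ k.+1) = (fun y => f y * f y ^+ k)); last first.
  by apply/funext=> y; rewrite exprS.
apply: is_derive_eq (DM hf IH) _.
case: k {IH} => [|k]; first by rewrite /= !mul0r !mulr0 expr0 mulr1 add0r mul1r.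
rewrite [_.+1.-1]/= [(k.+2).-1]/= !exprS; rewrite -[k.+2]addn2 -[k.+1]addn1 !natrD; ring.
Qed.

Lemma DV {f x df} : f x != 0 -> is_derive x 1 f df ->
  is_derive x 1 (fun y => (f y)^-1) (- (f x ^+ 2)^-1 * df).
Proof. by move=> h hf; apply: is_derive_eq (is_deriveV h hf) _. Qed.

Lemma Dexp {f x df} : is_derive x 1 f df ->
  is_derive x 1 (fun y => expR (f y)) (expR (f x) * df).
Proof. by move=> hf; apply: is_derive_eq (is_derive1_comp (is_derive_expR (f x)) hf) _. Qed.

Lemma Dpow (a x : R) : 0 < x -> is_derive x 1 (fun y => y `^ a) (a * x `^ (a - 1)).
Proof. by move=> x0; exact: is_derive1_powR. Qed.

Lemma in_oo0 (r : R) : (r \in `]0, +oo[%classic) = (0 < r).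
Proof.
by apply/idP/idP => [/set_mem|h]; [rewrite /= in_itv /= andbT | apply/mem_set; rewrite /= in_itv /= andbT].
Qed.

Lemma in_cc (x y r : R) : (r \in `[x, y]%classic) = (x <= r <= y).
Proof.
by apply/idP/idP => [/set_mem|h]; [rewrite /= in_itv | apply/mem_set; rewrite /= in_itv].
Qed.

Lemma dcontD {f x df} : is_derive x 1 f df -> {for x, continuous f}.
Proof. by move=> h; apply: dcont; exact: (@ex_derive _ _ _ _ _ _ _ h). Qed.

End Deriv.

Lemma inner1d (R : realType) (N : nat) (hN : (3 <= N)%N) (psi : R -> R) (RR A b a R' : R)
  (psic : forall r, {for r, continuous psi})
  (psi0 : forall r, 0 <= r -> 0 <= psi r)
  (hRR : 0 < RR) (hA : 0 < A) (hb : 0 < b) (ha : 0 <= a)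
  (tail : forall r, RR <= r -> psi r = A * expR (b * r `^ (a + 1)))
  (v : R -> R)
  (dv : forall r, 0 < r -> derivable v r 1)
  (ddv : forall r, 0 < r -> derivable (derive1 v) r 1)
  (v0 : forall r, r < RR -> v r = 0)
  (v1 : forall r, R' < r -> v r = 0) :
  (\int[lebesgue_measure]_(r in `]0%R, +oo[) ((derive1 v r ^+ 2) * psi r ^+ N.-1)%:E
   >= (((N%:R - 1) / 2) ^+ 2 * (a + 1) ^+ 2 * b ^+ 2)%:E
        * \int[lebesgue_measure]_(r in `]0%R, +oo[) ((r `^ (2 * a) * v r ^+ 2) * psi r ^+ N.-1)%:E
      + (1 / 4)%:E
        * \int[lebesgue_measure]_(r in `]0%R, +oo[) ((v r ^+ 2 / r ^+ 2) * psi r ^+ N.-1)%:E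
      + (2 * b * a * (a + 1) * (N%:R - 1) / 4)%:E
        * \int[lebesgue_measure]_(r in `]0%R, +oo[) ((r `^ (a - 1) * v r ^+ 2) * psi r ^+ N.-1)%:E)%E.
Proof.
set n := N.-1.
have [n' hn'] : exists n', n = n'.+1.
  by exists N.-2; rewrite /n; case: (N) hN => [|[|N0]].
have nRE : N%:R - 1 = n%:R :> R.
  rewrite /n; case: (N) hN => // N0 _; by rewrite /= mulrSr addrK.
set K := (N%:R - 1) * b * (a + 1) / 2.
set lo := RR / 2.
set M := Num.max R' RR + 1.
have lo0 : 0 < lo by rewrite /lo divr_gt0.
have loRR : lo < RR by rewrite /lo ltr_pdivrMr // ltr_pMr // ltr1n.
have RRM : RR < M.
  by rewrite /M (@le_lt_trans _ _ (Num.max R' RR)) ?ltrDl // le_max lexx orbT.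
have R'M : R' < M.
  by rewrite /M (@le_lt_trans _ _ (Num.max R' RR)) ?ltrDl // le_max lexx.
have loM : lo < M by apply: lt_trans RRM.
set vd := derive1 v.
have vd0 : forall r, r < RR -> vd r = 0.
  move=> r hr; apply: is_derive_zero_near; near=> y; apply: v0; near: y.
  exact: lt_nbhsl.
have vd1 : forall r, R' < r -> vd r = 0.
  move=> r hr; apply: is_derive_zero_near; near=> y; apply: v1; near: y.
  exact: lt_nbhsr.
set e := fun r => (A * expR (b * r `^ (a + 1))) ^+ n.
have psie : forall r, RR <= r -> psi r ^+ n = e r by move=> r hr; rewrite tail.
set g := fun r => K * r `^ a - (2 * r)^-1.
set F := fun r => g r * e r * v r ^+ 2.
set E := fun r => e r * ((K * (a * r `^ (a - 1)) + (2 * r ^+ 2)^-1) * v r ^+ 2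
   + g r * (2 * K * r `^ a) * v r ^+ 2 + 2 * g r * v r * vd r).
have he : forall r : R, 0 < r -> is_derive r 1 e (e r * (2 * K * r `^ a)).
  move=> r r0.
  have := DX n (DM (DC A r) (Dexp (DM (DC b r) (Dpow (a+1) r r0)))).
  move=> H; apply: is_derive_eq H _.
  by rewrite addrK /e /K nRE hn' /= exprS; field.
have hg : forall r : R, 0 < r -> is_derive r 1 g (K * (a * r `^ (a - 1)) + (2 * r ^+ 2)^-1).
  move=> r r0.
  have r2 : 2 * r != 0 by rewrite mulf_neq0 // gt_eqF.
  apply: is_derive_eq (DB (DM (DC K r) (Dpow a r r0)) (DV r2 (DM (DC 2 r) (DI r)))) _.
  by field; rewrite gt_eqF.
have dF : forall r : R, 0 < r -> is_derive r 1 F (E r).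
  move=> r r0.
  have hv := derivableP (dv r r0).
  apply: is_derive_eq (DM (DM (hg r r0) (he r r0)) (DX 2 hv)) _.
  rewrite /E /vd derive1E /=; ring.
set c1 := ((N%:R - 1) / 2) ^+ 2 * (a + 1) ^+ 2 * b ^+ 2.
set c3 := 2 * b * a * (a + 1) * (N%:R - 1) / 4.
have pw : forall r : R, 0 < r ->
  c1 * (r `^ (2 * a) * v r ^+ 2 * psi r ^+ n) + 1 / 4 * (v r ^+ 2 / r ^+ 2 * psi r ^+ n)
  + c3 * (r `^ (a - 1) * v r ^+ 2 * psi r ^+ n) <= vd r ^+ 2 * psi r ^+ n + E r.
  move=> r r0; case: (ltP r RR) => [rlt|rge].
    rewrite /E v0 // vd0 //; rewrite !(expr2, mul0r, mulr0, add0r, addr0) //.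
  rewrite psie //.
  have p2 : r `^ (2 * a) = (r `^ a) ^+ 2.
    by rewrite mulrC powRrM powR_mulrn ?powR_ge0.
  have eq : vd r ^+ 2 * e r + E r = c1 * (r `^ (2 * a) * v r ^+ 2 * e r)
     + 1 / 4 * (v r ^+ 2 / r ^+ 2 * e r) + c3 * (r `^ (a - 1) * v r ^+ 2 * e r)
     + e r * (vd r + g r * v r) ^+ 2.
    rewrite p2 /E /g /c1 /c3 /K; field; by rewrite gt_eqF.
  rewrite eq lerDl; apply: mulr_ge0; last exact: sqr_ge0.
  by rewrite /e exprn_ge0 // mulr_ge0 ?expR_ge0 // ltW.
have restr : forall h : R -> R, (forall r, 0 < r -> r < lo \/ M < r -> h r = 0) ->
    (\int[lebesgue_measure]_(r in `]0%R, +oo[) (h r)%:E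
     = \int[lebesgue_measure]_(r in `[lo, M]) (h r)%:E)%E.
  move=> h h0; rewrite integral_mkcond [in RHS]integral_mkcond.
  apply: eq_integral => r _; rewrite /patch /= in_oo0 in_cc.
  have [r0|r0] := ltP 0 r; last first.
    by rewrite ifF //; apply/negbTE; rewrite negb_and -ltNge (le_lt_trans r0 lo0).
  case: ifPn => // H0; move: H0; rewrite negb_and -!ltNge => /orP H.
  rewrite h0 //; by case: H; [left|right].
have out : forall r : R, r < lo \/ M < r -> v r = 0 /\ vd r = 0.
  move=> r [H|H].
    by split; [apply: v0|apply: vd0]; apply: lt_trans loRR.
  by split; [apply: v1|apply: vd1]; apply: lt_trans H.
pose L := fun r => vd r ^+ 2 * psi r ^+ n.
pose X := fun r => r `^ (2 * a) * v r ^+ 2 * psi r ^+ n.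
pose Y := fun r => v r ^+ 2 / r ^+ 2 * psi r ^+ n.
pose Z := fun r => r `^ (a - 1) * v r ^+ 2 * psi r ^+ n.
have rL := restr L (fun r _ H => ltac:(by case: (out r H) => _ h; rewrite /L h expr2 !mul0r)).
have rX := restr X (fun r _ H => ltac:(by case: (out r H) => h _; rewrite /X h expr2 !(mul0r, mulr0))).
have rY := restr Y (fun r _ H => ltac:(by case: (out r H) => h _; rewrite /Y h expr2 !(mul0r, mulr0))).
have rZ := restr Z (fun r _ H => ltac:(by case: (out r H) => h _; rewrite /Z h expr2 !(mul0r, mulr0))).

have ctsv : forall r : R, 0 < r -> {for r, continuous v} := fun r r0 => dcont (dv r r0).
have ctsvd : forall r : R, 0 < r -> {for r, continuous vd} := fun r r0 => dcont (ddv r r0).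
have ctspow : forall (c r : R), 0 < r -> {for r, continuous (fun y : R => y `^ c)} :=
  fun c r r0 => dcontD ((Dpow c r r0)).
have ctsid : forall r : R, {for r, continuous (fun y : R => y)} := fun r => dcontD ((DI r)).
have ctspsi : forall r : R, {for r, continuous (fun y => psi y ^+ n)} := fun r => cX n (psic r).
have ctse : forall r : R, 0 < r -> {for r, continuous e} := fun r r0 => dcontD ((he r r0)).
have ctsg : forall r : R, 0 < r -> {for r, continuous g} := fun r r0 => dcontD ((hg r r0)).
have ctsF : forall r : R, 0 < r -> {for r, continuous F} := fun r r0 => dcontD ((dF r r0)).
have cL : forall r : R, 0 < r -> {for r, continuous L}.
  by move=> r r0; apply: cM; [apply: cX; exact: ctsvd|exact: ctspsi].
have cXX : forall r : R, 0 < r -> {for r, continuous X}.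
  move=> r r0; apply: cM; last exact: ctspsi.
  by apply: cM; [exact: ctspow|apply: cX; exact: ctsv].
have cY : forall r : R, 0 < r -> {for r, continuous Y}.
  move=> r r0; apply: cM; last exact: ctspsi.
  apply: cM; first by apply: cX; exact: ctsv.
  by apply: cV; [rewrite expf_neq0 // gt_eqF|apply: cX; exact: ctsid].
have cZ : forall r : R, 0 < r -> {for r, continuous Z}.
  move=> r r0; apply: cM; last exact: ctspsi.
  by apply: cM; [exact: ctspow|apply: cX; exact: ctsv].
have cE : forall r : R, 0 < r -> {for r, continuous E}.
  move=> r r0; apply: cM; first exact: ctse.
  apply: cD; first apply: cD.
  - apply: cM; last by apply: cX; exact: ctsv.
    apply: cD; first by apply: cM; [exact: cC|apply: cM; [exact: cC|exact: ctspow]].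
    apply: cV; first by rewrite mulf_neq0 // expf_neq0 // gt_eqF.
    by apply: cM; [exact: cC|apply: cX; exact: ctsid].
  - apply: cM; last by apply: cX; exact: ctsv.
    by apply: cM; [exact: ctsg|apply: cM; [exact: cC|exact: ctspow]].
  - by apply: cM; [apply: cM; [apply: cM; [exact: cC|exact: ctsg]|exact: ctsv]|exact: ctsvd].
have integ : forall h : R -> R, (forall r : R, 0 < r -> {for r, continuous h}) ->
    lebesgue_measure.-integrable `[lo, M] (fun r => (h r)%:E).
  move=> h ch; apply: continuous_compact_integrable; first exact: segment_compact.
  apply: continuous_subspace_itv => r; rewrite in_itv /= => /andP[hr _].
  by apply: ch; exact: lt_le_trans lo0 hr.
have ftc : (\int[lebesgue_measure]_(r in `[lo, M]) (E r)%:E = 0)%E.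
  rewrite (@continuous_FTC2 _ E F lo M loM).
  - by rewrite /F v1 // v0 // expr2 !mulr0 subee.
  - apply: continuous_subspace_itv => r; rewrite in_itv /= => /andP[hr _].
    by apply: cE; exact: lt_le_trans lo0 hr.
  - split.
    + move=> r; rewrite in_itv /= => /andP[hr _].
      exact: (@ex_derive _ _ _ _ _ _ _ (dF r (lt_trans lo0 hr))).
    + by apply: cvg_at_right_filter; apply: ctsF.
    + by apply: cvg_at_left_filter; apply: ctsF; exact: lt_trans loM.
  - move=> r; rewrite in_itv /= => /andP[hr _].
    by rewrite derive1E; apply: derive_val; exact: dF (lt_trans lo0 hr).
have mT : measurable `[lo, M] by [].
have eD : forall h1 h2 : R -> R, (forall r : R, 0 < r -> {for r, continuous h1}) ->
    (forall r : R, 0 < r -> {for r, continuous h2}) ->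
    (\int[lebesgue_measure]_(r in `[lo, M]) ((h1 r + h2 r)%:E)
     = \int[lebesgue_measure]_(r in `[lo, M]) (h1 r)%:E
       + \int[lebesgue_measure]_(r in `[lo, M]) (h2 r)%:E)%E.
  move=> h1 h2 c1' c2'; rewrite -integralD //; try exact: integ.
have eZ : forall (c : R) (h : R -> R), (forall r : R, 0 < r -> {for r, continuous h}) ->
    (\int[lebesgue_measure]_(r in `[lo, M]) ((c * h r)%:E)
     = c%:E * \int[lebesgue_measure]_(r in `[lo, M]) (h r)%:E)%E.
  move=> c h ch; rewrite -integralZl //; last exact: integ.
have key : (c1%:E * \int[lebesgue_measure]_(r in `[lo, M]) (X r)%:E
      + (1 / 4)%:E * \int[lebesgue_measure]_(r in `[lo, M]) (Y r)%:E
      + c3%:E * \int[lebesgue_measure]_(r in `[lo, M]) (Z r)%:E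
      <= \int[lebesgue_measure]_(r in `[lo, M]) (L r)%:E)%E.
  have -> : (\int[lebesgue_measure]_(r in `[lo, M]) (L r)%:E
      = \int[lebesgue_measure]_(r in `[lo, M]) ((L r + E r)%:E))%E.
    by rewrite eD // ftc adde0.
  rewrite -!eZ // -!eD //.
  all: try solve [move=> r r0; repeat first [exact: cC | exact: (cXX r r0) | exact: (cY r r0) | exact: (cZ r r0) | exact: (cL r r0) | exact: (cE r r0) | apply: cD | apply: cM]].
  apply: le_integral => //.
  - by apply: integ => r r0; repeat first [exact: cC | exact: (cXX r r0) | exact: (cY r r0) | exact: (cZ r r0) | exact: (cL r r0) | exact: (cE r r0) | apply: cD | apply: cM].
  - by apply: integ => r r0; repeat first [exact: cC | exact: (cXX r r0) | exact: (cY r r0) | exact: (cZ r r0) | exact: (cL r r0) | exact: (cE r r0) | apply: cD | apply: cM].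
  move=> r; rewrite inE /= in_itv /= => /andP[hr _]; rewrite lee_fin.
  exact: pw (lt_le_trans lo0 hr).
move: key; rewrite -rL -rX -rY -rZ; exact.
Unshelve. all: by end_near.
Qed.

Lemma mG (R : realType) (d : measure_display) (Omega : measurableType d)
  (K : R * Omega -> R) (k : R -> Omega -> R) :
  measurable_fun [set: R * Omega] K ->
  (forall r w, 0 < r -> K (r, w) = k r w) ->
  (forall r w, 0 < r -> 0 <= k r w) ->
  measurable_fun [set: Omega]
    (fun w => \int[@lebesgue_measure R]_(r in `]0%R, +oo[) (k r w)%:E)%E.
Proof.
move=> mK Kk k0.
pose H := fun p : R * Omega => \1_(`]0%R, +oo[%classic : set R) p.1 * K p.
have mHr : measurable_fun [set: R * Omega] H.
  apply: (@measurable_funM _ _ _ _ (fun p : R * Omega => \1_(`]0%R, +oo[%classic : set R) p.1) K) => //.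
  exact: (measurableT_comp (measurable_indic (measurable_itv `]0%R, +oo[)) measurable_fst).
have mH : measurable_fun [set: R * Omega] (fun p => (H p)%:E) by exact/measurable_EFinP.
have H0 : forall p, (0 <= (H p)%:E)%E.
  case=> r w; rewrite lee_fin /H indicE /= in_oo0.
  by have [r0|r0] := ltP 0 r; rewrite ?mul1r ?mul0r // Kk // k0.
pose T := (measurableTypeR R * Omega)%type.
have mH' : measurable_fun [set: T] (fun p : T => (H p)%:E) := mH.
have := @measurable_fun_fubini_tonelli_G _ _ (measurableTypeR R) _ _ (@lebesgue_measure R)
  (fun p : T => (H p)%:E) mH' H0.
rewrite /fubini_G /=.
rewrite (_ : (fun w => _) = (fun w => \int[@lebesgue_measure R]_(r in `]0%R, +oo[) (k r w)%:E)%E) //.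
apply/funext => w; rewrite [in RHS]integral_mkcond; apply: eq_integral => r _.
rewrite /patch /H indicE /= in_oo0.
by have [r0|r0] := ltP 0 r; rewrite ?mul1r ?mul0r // Kk.
Qed.
Theorem corollary3p1
  (R : realType) (N : nat) (hN : (3 <= N)%N)
  (psi : R -> R) (RR A b a : R)
  (hpsi_smooth : smooth_on psi setT)
  (hpsi_nonneg : forall r : R, 0 <= r -> 0 <= psi r)
  (hpsi_pos : forall r : R, 0 < r -> 0 < psi r)
  (hpsi_d1 : derive1 psi 0 = 1)
  (hpsi_even : forall k : nat, derive1n (2 * k) psi 0 = 0)
  (hRR : 0 < RR) (hA : 0 < A) (hb : 0 < b) (ha : 0 <= a)
  (hpsi_tail : forall r : R, RR <= r -> psi r = A * expR (b * r `^ (a + 1)))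
  (d : measure_display) (Omega : measurableType d)
  (sigma : {measure set Omega -> \bar R})
  (u : R -> Omega -> R)
  (hu_smooth : forall w : Omega, smooth_on (u^~ w) [set r | 0 < r])
  (hu_supp_in : forall (r : R) (w : Omega), r < RR -> u r w = 0)
  (hu_supp_cpt : exists R' : R, forall (r : R) (w : Omega), R' < r -> u r w = 0)
  (hu_meas : measurable_fun [set: R * Omega] (fun p : R * Omega => u p.1 p.2))
  (hdu_meas : measurable_fun [set: R * Omega]
                (fun p : R * Omega => derive1 (u^~ p.2) p.1)) :
  (model_integral sigma N psi (fun r w => ((derive1 (u^~ w) r) ^+ 2)%R)
   >= ((((N%:R - 1) / 2) ^+ 2 * (a + 1) ^+ 2 * b ^+ 2)%R)%:E
        * model_integral sigma N psi (fun r w => (r `^ (2 * a) * u r w ^+ 2)%R)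
      + ((1 / 4)%R)%:E
        * model_integral sigma N psi (fun r w => (u r w ^+ 2 / r ^+ 2)%R)
      + ((2 * b * a * (a + 1) * (N%:R - 1) / 4)%R)%:E
        * model_integral sigma N psi (fun r w => (r `^ (a - 1) * u r w ^+ 2)%R))%E.
Proof.
have psic : forall r : R, {for r, continuous psi}.
  by move=> r; apply: dcont; exact: (hpsi_smooth 0 r I).
have [R' hR'] := hu_supp_cpt.
pose D := (`]0%R, +oo[%classic : set R).
pose k0 := fun r w => derive1 (u^~ w) r ^+ 2 * psi r ^+ N.-1.
pose k1 := fun r w => r `^ (2 * a) * u r w ^+ 2 * psi r ^+ N.-1.
pose k2 := fun r w => u r w ^+ 2 / r ^+ 2 * psi r ^+ N.-1.
pose k3 := fun r w => r `^ (a - 1) * u r w ^+ 2 * psi r ^+ N.-1.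
have mpsi : measurable_fun [set: R * Omega] (fun p : R * Omega => psi p.1 ^+ N.-1).
  apply: measurable_funX.
  exact: (measurableT_comp (continuous_measurable_fun psic) measurable_fst).
have mpow : forall c : R, measurable_fun [set: R * Omega] (fun p : R * Omega => p.1 `^ c).
  by move=> c; exact: (measurableT_comp (measurable_powR c) measurable_fst).
have mu2 : measurable_fun [set: R * Omega] (fun p : R * Omega => u p.1 p.2 ^+ 2).
  exact: measurable_funX.
have psin0 : forall r : R, 0 < r -> 0 <= psi r ^+ N.-1.
  by move=> r r0; rewrite exprn_ge0 // hpsi_nonneg // ltW.
have m0 : measurable_fun [set: Omega] (fun w => \int[lebesgue_measure]_(r in D) (k0 r w)%:E)%E.
  apply: (@mG _ _ _ (fun p => derive1 (u^~ p.2) p.1 ^+ 2 * psi p.1 ^+ N.-1)) => //.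
  - by apply: measurable_funM => //; exact: measurable_funX.
  - by move=> r w r0; rewrite /k0 mulr_ge0 ?sqr_ge0 ?psin0.
have m1 : measurable_fun [set: Omega] (fun w => \int[lebesgue_measure]_(r in D) (k1 r w)%:E)%E.
  apply: (@mG _ _ _ (fun p => p.1 `^ (2 * a) * u p.1 p.2 ^+ 2 * psi p.1 ^+ N.-1)) => //.
  - by apply: measurable_funM => //; exact: measurable_funM (mpow _) mu2.
  - move=> r w r0; apply: mulr_ge0; last exact: psin0.
    by apply: mulr_ge0; [exact: powR_ge0|exact: sqr_ge0].
have m2 : measurable_fun [set: Omega] (fun w => \int[lebesgue_measure]_(r in D) (k2 r w)%:E)%E.
  apply: (@mG _ _ _ (fun p => u p.1 p.2 ^+ 2 * (p.1 `^ (-1)) ^+ 2 * psi p.1 ^+ N.-1)) => //.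
  - by apply: measurable_funM => //; apply: measurable_funM => //; exact: measurable_funX (mpow _).
  - by move=> r w r0; rewrite /k2 /= powR_inv1 ?ltW // exprVn.
  - move=> r w r0; apply: mulr_ge0; last exact: psin0.
    by apply: mulr_ge0; [exact: sqr_ge0|rewrite invr_ge0; exact: sqr_ge0].
have m3 : measurable_fun [set: Omega] (fun w => \int[lebesgue_measure]_(r in D) (k3 r w)%:E)%E.
  apply: (@mG _ _ _ (fun p => p.1 `^ (a - 1) * u p.1 p.2 ^+ 2 * psi p.1 ^+ N.-1)) => //.
  - by apply: measurable_funM => //; exact: measurable_funM (mpow _) mu2.
  - move=> r w r0; apply: mulr_ge0; last exact: psin0.
    by apply: mulr_ge0; [exact: powR_ge0|exact: sqr_ge0].
have hN1 : 0 <= N%:R - 1 :> R.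
  by rewrite subr_ge0 ler1n (leq_trans _ hN).
set c1 := ((N%:R - 1) / 2) ^+ 2 * (a + 1) ^+ 2 * b ^+ 2.
set c3 := 2 * b * a * (a + 1) * (N%:R - 1) / 4.
have c1p : (0 <= c1%:E)%E.
  by rewrite lee_fin; apply: mulr_ge0; [apply: mulr_ge0|]; exact: sqr_ge0.
have c2p : (0 <= (1 / 4 : R)%:E)%E by rewrite lee_fin divr_ge0.
have c3p : (0 <= c3%:E)%E.
  rewrite lee_fin /c3; apply: divr_ge0 => //; apply: mulr_ge0 => //.
  apply: mulr_ge0; last by apply: addr_ge0.
  by apply: mulr_ge0 => //; apply: mulr_ge0 => //; exact: ltW.
have Gge0 : forall k : R -> Omega -> R, (forall r w, 0 < r -> 0 <= k r w) ->
    forall w, [set: Omega] w -> (0 <= \int[lebesgue_measure]_(r in D) (k r w)%:E)%E.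
  move=> k hk w _; apply: integral_ge0 => r; rewrite /D /= in_itv /= andbT => r0.
  by rewrite lee_fin hk.
have k0p : forall r w, 0 < r -> 0 <= k0 r w.
  by move=> r w r0; apply: mulr_ge0; [exact: sqr_ge0|exact: psin0].
have k1p : forall r w, 0 < r -> 0 <= k1 r w.
  move=> r w r0; apply: mulr_ge0; last exact: psin0.
  by apply: mulr_ge0; [exact: powR_ge0|exact: sqr_ge0].
have k2p : forall r w, 0 < r -> 0 <= k2 r w.
  move=> r w r0; apply: mulr_ge0; last exact: psin0.
  by apply: mulr_ge0; [exact: sqr_ge0|rewrite invr_ge0; exact: sqr_ge0].
have k3p : forall r w, 0 < r -> 0 <= k3 r w.
  move=> r w r0; apply: mulr_ge0; last exact: psin0.
  by apply: mulr_ge0; [exact: powR_ge0|exact: sqr_ge0].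
have key : (c1%:E * \int[sigma]_(w in [set: Omega]) \int[lebesgue_measure]_(r in D) (k1 r w)%:E
    + (1 / 4 : R)%:E * \int[sigma]_(w in [set: Omega]) \int[lebesgue_measure]_(r in D) (k2 r w)%:E
    + c3%:E * \int[sigma]_(w in [set: Omega]) \int[lebesgue_measure]_(r in D) (k3 r w)%:E
    <= \int[sigma]_(w in [set: Omega]) \int[lebesgue_measure]_(r in D) (k0 r w)%:E)%E.
  rewrite -(ge0_integralZl sigma measurableT m1 (Gge0 _ k1p) c1p).
  rewrite -(ge0_integralZl sigma measurableT m2 (Gge0 _ k2p) c2p).
  rewrite -(ge0_integralZl sigma measurableT m3 (Gge0 _ k3p) c3p).
  rewrite -ge0_integralD //; first last.
  - exact: measurable_funeM.
  - by move=> w _; apply: mule_ge0 => //; exact: Gge0.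
  - exact: measurable_funeM.
  - by move=> w _; apply: mule_ge0 => //; exact: Gge0.
  rewrite -ge0_integralD //; first last.
  - exact: measurable_funeM.
  - by move=> w _; apply: mule_ge0 => //; exact: Gge0.
  - by apply: emeasurable_funD; exact: measurable_funeM.
  - by move=> w _; apply: adde_ge0; apply: mule_ge0 => //; exact: Gge0.
  apply: ge0_le_integral => //.
  - by move=> w _; apply: adde_ge0; [apply: adde_ge0|]; apply: mule_ge0 => //; exact: Gge0.
  - by apply: emeasurable_funD; [apply: emeasurable_funD|]; exact: measurable_funeM.
  move=> w _.
  exact: (@inner1d R N hN psi RR A b a R' psic hpsi_nonneg hRR hA hb ha hpsi_tail (u^~ w)
    (fun r r0 => hu_smooth w 0 r r0) (fun r r0 => hu_smooth w 1 r r0)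
    (fun r h => hu_supp_in r w h) (fun r h => hR' r w h)).
rewrite /model_integral; exact: key.
Qed.
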